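(* In the setting of the adaptive implicit-explicit iteration described in the context, let $a>0$ and $\eta_{\min}>0$, and suppose the step size satisfies $0<\eta_{\min}\le\eta\le\frac1{\|\bm T\|+2a}$. Then there exists $b>0$ such that for every $k\ge0$, $\left\|\begin{pmatrix}\nabla_{\bm d}L(\bm d_{k+1},\beta_{k+1})\\ \nabla_\beta L(\bm d_{k+1},\beta_{k+1})\end{pmatrix}\right\|_2\le b\,\|\bm d_{k+1}-\bm d_k\|_2.$
   Context: Let $n\ge1$, $r>0$, $\bm g\in\mathbb R^n$ with $\bm g\neq0$, and $\bm H=\bm D+\bm T\in\mathbb R^{n\times n}$, where $\bm D$ is diagonal with nonnegative diagonal entries $D_{i,i}$ and $\bm T$ is symmetric; $\|\bm T\|$ is the spectral norm. Let $f(\bm d)=\bm g^\top\bm d+\frac12\bm d^\top\bm H\bm d$ and $L(\bm d,\beta)=f(\bm d)+\frac{\beta^2}{2}(\|\bm d\|_2^2-r^2)$ for $\bm d\in\mathbb R^n$, $\beta\in\mathbb R$. Adaptive implicit-explicit iteration with step size $\eta>0$: set $\bm d_0=-r\bm g/\|\bm g\|_2$. For $k=0,1,2,\dots$: let $\bm b_k=\bm d_k-\eta(\bm g+\bm T\bm d_k)$ and $\phi_k(\lambda)=\sum_{i=1}^n\big([\bm b_k]_i/(1+\eta(D_{i,i}+\lambda))\big)^2$; set $\lambda_{k+1}=0$ if $\phi_k(0)\le r^2$, and otherwise let $\lambda_{k+1}>0$ be the solution of $\phi_k(\lambda)=r^2$; then $\bm d_{k+1}=(\bm I+\eta(\bm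 D+\lambda_{k+1}\bm I))^{-1}\bm b_k$. Finally $\beta_k=\sqrt{\lambda_k}$. *)

(* Defs.v *)
From HB Require Import structures.
From mathcomp Require Import all_boot all_order all_algebra.
From mathcomp Require Import all_classical all_reals.
Set Implicit Arguments. Unset Strict Implicit. Unset Printing Implicit Defensive.
Import Order.TTheory GRing.Theory Num.Theory.
Local Open Scope ring_scope.

Section Defs.
Variable R : realType.

Definition norm2 (n : nat) (v : 'cV[R]_n) : R :=
  Num.sqrt (\sum_(i < n) (v i 0) ^+ 2).

Definition specnorm (n : nat) (T : 'M[R]_n) : R :=
  sup [set norm2 (T *m x) | x in [set x : 'cV[R]_n | norm2 x <= 1]]%classic.

Definition fobj (n : nat) (g : 'cV[R]_n) (H : 'M[R]_n) (d : 'cV[R]_n) : R :=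
  (g^T *m d) 0 0 + 2^-1 * (d^T *m H *m d) 0 0.

Definition Lag (n : nat) (g : 'cV[R]_n) (H : 'M[R]_n) (r : R)
  (d : 'cV[R]_n) (beta : R) : R :=
  fobj g H d + beta ^+ 2 / 2 * (norm2 d ^+ 2 - r ^+ 2).

(* Gradients of L (H symmetric): grad_d L = g + H d + beta^2 d,
   d/dbeta L = beta (||d||^2 - r^2) *)
Definition gradL_d (n : nat) (g : 'cV[R]_n) (H : 'M[R]_n)
  (d : 'cV[R]_n) (beta : R) : 'cV[R]_n :=
  g + H *m d + beta ^+ 2 *: d.

Definition gradL_beta (n : nat) (r : R) (d : 'cV[R]_n) (beta : R) : R :=
  beta * (norm2 d ^+ 2 - r ^+ 2).

Definition gradL_norm (n : nat) (g : 'cV[R]_n) (H : 'M[R]_n) (r : R)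
  (d : 'cV[R]_n) (beta : R) : R :=
  Num.sqrt (norm2 (gradL_d g H d beta) ^+ 2 + (gradL_beta r d beta) ^+ 2).

Definition bvec (n : nat) (g : 'cV[R]_n) (T : 'M[R]_n) (eta : R)
  (d : 'cV[R]_n) : 'cV[R]_n :=
  d - eta *: (g + T *m d).

Definition phi (n : nat) (D : 'M[R]_n) (eta : R) (b : 'cV[R]_n) (lam : R) : R :=
  \sum_(i < n) (b i 0 / (1 + eta * (D i i + lam))) ^+ 2.

(* The adaptive implicit-explicit iteration, stated relationally:
   d : nat -> iterates d_k, lam : nat -> multipliers lambda_k (k >= 1). *)
Definition IMEX_iteration (n : nat) (g : 'cV[R]_n) (D T : 'M[R]_n)
  (r eta : R) (d : nat -> 'cV[R]_n) (lam : nat -> R) : Prop :=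
  d 0%N = - (r / norm2 g) *: g /\
  forall k : nat,
    let b := bvec g T eta (d k) in
    (phi D eta b 0 <= r ^+ 2 -> lam k.+1 = 0) /\
    (r ^+ 2 < phi D eta b 0 -> 0 < lam k.+1 /\ phi D eta b (lam k.+1) = r ^+ 2) /\
    d k.+1 = invmx (1%:M + eta *: (D + (lam k.+1)%:M)) *m b.

End Defs.

(* Main.v *)
Require Import Defs.
From HB Require Import structures.
From mathcomp Require Import all_boot all_order all_algebra.
From mathcomp Require Import all_classical all_reals.
From mathcomp Require Import ring lra.
Import Order.TTheory GRing.Theory Num.Theory.
Local Open Scope ring_scope.

Lemma norm2_ge0 {R : realType} {n} (v : 'cV[R]_n) : 0 <= norm2 v.
Proof. exact: sqrtr_ge0. Qed.

Lemma norm2_entry {R : realType} {n} (v : 'cV[R]_n) j : `|v j 0| <= norm2 v.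
Proof.
rewrite /norm2 -sqrtr_sqr; apply: ler_wsqrtr.
rewrite (bigD1 j) //= lerDl; apply: sumr_ge0 => i _; exact: sqr_ge0.
Qed.

Lemma norm2_le_sum {R : realType} {n} (v : 'cV[R]_n) :
  norm2 v <= \sum_i `|v i 0|.
Proof.
have h0 : 0 <= \sum_i `|v i 0| by apply: sumr_ge0 => i _.
rewrite /norm2 -(ger0_norm h0) -sqrtr_sqr; apply: ler_wsqrtr.
rewrite expr2 mulr_suml; apply: ler_sum => i _.
rewrite mulr_sumr (bigD1 i) //=.
rewrite -normrM -expr2 ger0_norm ?sqr_ge0 //.
rewrite lerDl; apply: sumr_ge0 => j _; exact: mulr_ge0.
Qed.

Theorem mainTheorem5 (R : realType) (n : nat) (hn : (0 < n)%N)
  (r : R) (hr : 0 < r) (g : 'cV[R]_n) (hg : g != 0)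
  (D T : 'M[R]_n) (hD : is_diag_mx D) (hDnn : forall i, 0 <= D i i)
  (hT : T^T = T)
  (a eta_min eta : R) (ha : 0 < a) (heta_min : 0 < eta_min)
  (heta1 : eta_min <= eta) (heta2 : eta <= (specnorm T + 2 * a)^-1)
  (d : nat -> 'cV[R]_n) (lam : nat -> R)
  (hiter : IMEX_iteration g D T r eta d lam) :
  exists b : R, 0 < b /\
    forall k : nat,
      gradL_norm g (D + T) r (d k.+1) (Num.sqrt (lam k.+1))
        <= b * norm2 (d k.+1 - d k).
Proof.
case: hiter => _ hit.
have etapos : 0 < eta by apply: lt_le_trans heta1.
have etan0 : eta != 0 by rewrite gt_eqF.
case/diag_mxP: (hD) => dd Ddef.
have hdd i : 0 <= dd 0 i by have := hDnn i; rewrite Ddef mxE eqxx mulr1n.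
pose s : R := \sum_i (\sum_j `|T i j| + eta^-1).
have s0 : 0 <= s.
  apply: sumr_ge0 => i _; apply: addr_ge0; last by rewrite invr_ge0 ltW.
  by apply: sumr_ge0.
exists (1 + s); split; first by lra.
move=> k.
case: (hit k) => h0 [h1 h2].
set bk := bvec g T eta (d k) in h0 h1 h2.
set l := lam k.+1 in h0 h1 h2 *.
have lge0 : 0 <= l.
  case: (leP (phi D eta bk 0) (r ^+ 2)) => [/h0 -> // | /h1 [/ltW //]].
pose c := \row_i (1 + eta * (dd 0 i + l)).
have cpos i : 0 < c 0 i.
  rewrite mxE; have := hdd i; nra.
have Mdef : 1%:M + eta *: (D + l%:M) = diag_mx c.
  apply/matrixP => i j; rewrite Ddef !mxE.
  by case: (i == j); rewrite ?mulr1n ?mulr0n //= ?addr0 ?mulr0 ?add0r.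
have Mu : diag_mx c \in unitmx.
  rewrite unitmxE det_diag unitfE; apply/prodf_neq0 => i _.
  by rewrite gt_eqF.
have Hd : diag_mx c *m d k.+1 = bk by rewrite h2 Mdef mulmxA mulmxV // mul1mx.
have Hi i : c 0 i * d k.+1 i 0 = bk i 0.
  by have := congr1 (fun M : 'cV[R]_n => M i 0) Hd; rewrite /= mul_diag_mx mxE.
have Eg : gradL_d g (D + T) (d k.+1) (Num.sqrt l) =
          T *m (d k.+1 - d k) - eta^-1 *: (d k.+1 - d k).
  rewrite /gradL_d sqr_sqrtr // mulmxBr mulmxDl Ddef mul_diag_mx.
  apply/colP => i; have := Hi i; rewrite /bk /bvec.
  move: (T *m d k.+1) (T *m d k) => u v.
  rewrite !mxE => H.
  have Hx0 : d k i 0 = (1 + eta * (dd 0 i + l)) * d k.+1 i 0 + eta * (g i 0 + v i 0).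
    by rewrite H subrK.
  rewrite Hx0; field.
  exact: etan0.
have Eb : gradL_beta r (d k.+1) (Num.sqrt l) = 0.
  case: (leP (phi D eta bk 0) (r ^+ 2)) => [/h0 -> | /h1 [_ hphi]].
    by rewrite /gradL_beta sqrtr0 mul0r.
  rewrite /gradL_beta /norm2 sqr_sqrtr; last by apply: sumr_ge0 => i _; exact: sqr_ge0.
  suff -> : \sum_i d k.+1 i 0 ^+ 2 = phi D eta bk l by rewrite hphi subrr mulr0.
  rewrite /phi; apply: eq_bigr => i _; congr (_ ^+ 2).
  rewrite -Hi Ddef [c 0 i]mxE !mxE eqxx mulr1n mulrC mulrA mulVf ?mul1r //.
  by have := cpos i; rewrite mxE => h; rewrite gt_eqF.
have z2 : (0:R) ^+ 2 = 0 by rewrite expr2 mulr0.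
rewrite /gradL_norm Eb z2 addr0 sqrtr_sqr ger0_norm ?norm2_ge0 //.
rewrite Eg; move: (d k.+1 - d k) => Dl.
apply: le_trans (norm2_le_sum _) _.
have N0 := norm2_ge0 Dl.
have : \sum_i `|(T *m Dl - eta^-1 *: Dl) i 0| <= s * norm2 Dl.
  rewrite /s mulr_suml; apply: ler_sum => i _.
  rewrite !mxE; apply: le_trans (ler_normB _ _) _.
  rewrite mulrDl; apply: lerD.
    apply: le_trans (ler_norm_sum _ _ _) _; rewrite mulr_suml.
    apply: ler_sum => j _; rewrite normrM.
    by apply: ler_wpM2l; [exact: normr_ge0 | exact: norm2_entry].
  rewrite normrM [`|eta^-1|]ger0_norm; last by rewrite invr_ge0 ltW.
  apply: ler_wpM2l; first by rewrite invr_ge0 ltW.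
  exact: norm2_entry.
move=> h; rewrite mulrDl mul1r; lra.
Qed.
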